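(* Let $(\alpha_k)_{k\ge1}$ be a sequence of real numbers with $\alpha_k>0$ for all $k\ge1$ such that $\sum_{k=1}^\infty\frac{\alpha_{k+1}^2}{\alpha_k}$ converges. Then $\sum_{k=1}^\infty\alpha_k$ converges. *)

(* Defs.v *)
From Stdlib Require Import Reals.
From Coquelicot Require Import Coquelicot.

(* Main.v *)
Require Import Defs.
From Stdlib Require Import Reals Lra Psatz.
From Coquelicot Require Import Coquelicot.
Open Scope R_scope.

Theorem lemma6p1 (alpha : nat -> R)
  (Hpos : forall k : nat, (1 <= k)%nat -> 0 < alpha k)
  (Hconv : ex_series (fun n : nat => (alpha (S (S n)))^2 / alpha (S n))) :
  ex_series (fun n : nat => alpha (S n)).
Proof.
  pose (c := fun n => alpha (S n)).
  pose (b := fun n : nat => (alpha (S (S n)))^2 / alpha (S n)).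
  assert (Hc : forall n, 0 < c n) by (intro n; apply Hpos; lia).
  assert (Hb : forall n, 0 <= b n).
  { intro n; unfold b. pose proof (Hc n); unfold c in *.
    apply Rmult_le_pos; [nra| left; apply Rinv_0_lt_compat; auto]. }
  assert (Hstep : forall n, 2 * c (S n) <= b n + c n).
  { intro n. pose proof (Hc n); pose proof (Hc (S n)).
    assert (E : b n * c n = c (S n) ^ 2).
    { unfold b, c. field. apply Rgt_not_eq. exact H. }
    assert (Hb' : 0 <= b n) by apply Hb.
    assert (Q : 0 <= (b n + c n - 2 * c (S n)) * (b n + c n + 2 * c (S n))).
    { replace ((b n + c n - 2 * c (S n)) * (b n + c n + 2 * c (S n))) with ((b n - c n)^2) by (symmetry; transitivity ((b n - c n)^2 + 4*(b n * c n - c (S n)^2)); [ring | rewrite E; ring]).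
      apply pow2_ge_0. }
    destruct (Rle_or_lt (2 * c (S n)) (b n + c n)) as [h|h]; [exact h|].
    exfalso. assert (0 < (2 * c (S n) - (b n + c n)) * (b n + c n + 2 * c (S n))) by (apply Rmult_lt_0_compat; lra).
    lra. }
  destruct (ex_series_Reals_0 _ Hconv) as [B HB].
  assert (HTB : forall n, sum_n b n <= B).
  { intro n. rewrite sum_n_Reals. apply (growing_ineq (fun N => sum_f_R0 b N)); [|exact HB].
    intro k. simpl. pose proof (Hb (S k)). lra. }
  assert (Hcl : forall n, sum_n c (S n) + c (S n) <= 2 * c O + sum_n b n).
  { induction n.
    - rewrite sum_Sn, !sum_O. pose proof (Hstep O). unfold plus; simpl. lra.
    - rewrite (sum_Sn c (S n)), (sum_Sn b n). unfold plus; simpl.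
      pose proof (Hstep (S n)). simpl in IHn. lra. }
  assert (Hbd : forall n, sum_n c n <= 2 * c O + B).
  { intro n; destruct n.
    - rewrite sum_O. pose proof (Hc O). pose proof (HTB O). rewrite sum_O in H0. pose proof (Hb O). lra.
    - pose proof (Hcl n). pose proof (HTB n). pose proof (Hc (S n)). lra. }
  destruct (ex_finite_lim_seq_incr (sum_n c) (2 * c O + B)) as [l Hl].
  - intro n. rewrite sum_Sn. unfold plus; simpl. pose proof (Hc (S n)). lra.
  - exact Hbd.
  - exists l. apply is_series_Reals. unfold infinite_sum.
    apply is_lim_seq_Reals in Hl. intros e He. destruct (Hl e He) as [N HN].
    exists N. intros n Hn. rewrite <- sum_n_Reals. apply HN. lia.
Qed.
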